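(* Let $A=(A,\oplus,\odot)$ be a skew brace, and $D$ a cyclic characteristic subgroup of $A_{\oplus}$ such that $D\leq Z\left(A_{\oplus}^{(n)}\right)$ for some positive integer $n$. Then there exists a positive integer $m$ such that $A_{\odot}^{(m+n)}\leq C_{A_{\oplus}}(D)$.
   Context: A skew brace is a set $A$ with two binary operations $\oplus,\odot$ such that $A_{\oplus}=(A,\oplus)$ and $A_{\odot}=(A,\odot)$ are groups and $a\odot(b\oplus c)=(a\odot b)\ominus a\oplus(a\odot c)$ for all $a,b,c\in A$, where $\ominus a$ is the inverse of $a$ in $A_{\oplus}$. The derived series of a group $G$ is indexed by $G^{(1)}=G$, $G^{(i+1)}=[G^{(i)},G^{(i)}]$; $Z(G)$ denotes the center and $C_G(H)$ the centralizer of $H$ in $G$. *)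

(* Defs.v *)
Section Groups.
Variable T : Type.
Variables (op : T -> T -> T) (e : T) (iv : T -> T).

Definition is_group : Prop :=
  (forall x y z, op x (op y z) = op (op x y) z) /\
  (forall x, op e x = x) /\ (forall x, op x e = x) /\
  (forall x, op (iv x) x = e) /\ (forall x, op x (iv x) = e).

Inductive gen (S : T -> Prop) : T -> Prop :=
| gen_in : forall x, S x -> gen S x
| gen_one : gen S e
| gen_op : forall x y, gen S x -> gen S y -> gen S (op x y)
| gen_inv : forall x, gen S x -> gen S (iv x).

Definition is_subgroup (H : T -> Prop) : Prop :=
  H e /\ (forall x y, H x -> H y -> H (op x y)) /\ (forall x, H x -> H (iv x)).

Definition commg (x y : T) : T := op (op (iv x) (iv y)) (op x y).

Definition commutator_subgroup (H : T -> Prop) : T -> Prop :=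
  gen (fun z => exists x y, H x /\ H y /\ z = commg x y).

(* der k = G^(k+1) *)
Fixpoint der (k : nat) : T -> Prop :=
  match k with
  | O => fun _ => True
  | S k' => commutator_subgroup (der k')
  end.

(* derived series indexed as in the paper: G^(1) = G, G^(i+1) = [G^(i),G^(i)];
   used only for i >= 1 *)
Definition derived (i : nat) : T -> Prop := der (i - 1).

Definition center (H : T -> Prop) : T -> Prop :=
  fun x => H x /\ forall y, H y -> op x y = op y x.

Definition centralizer (D : T -> Prop) : T -> Prop :=
  fun x => forall d, D d -> op x d = op d x.

Definition is_cyclic_subgroup (D : T -> Prop) : Prop :=
  exists g, forall x, D x <-> gen (fun y => y = g) x.

Definition is_automorphism (f : T -> T) : Prop :=
  (forall x y, f (op x y) = op (f x) (f y)) /\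
  (forall x y, f x = f y -> x = y) /\ (forall y, exists x, f x = y).

Definition is_characteristic (D : T -> Prop) : Prop :=
  is_subgroup D /\ forall f, is_automorphism f -> forall x, D x -> D (f x).

Definition subset (A B : T -> Prop) : Prop := forall x, A x -> B x.

End Groups.

Definition is_skew_brace (A : Type)
  (add : A -> A -> A) (zero : A) (neg : A -> A)
  (mul : A -> A -> A) (one : A) (inv : A -> A) : Prop :=
  is_group A add zero neg /\ is_group A mul one inv /\
  forall a b c, mul a (add b c) = add (add (mul a b) (neg a)) (mul a c).

(* Main.v *)
Require Import Defs.
From Stdlib Require Import ZArith Lia.

Lemma gA {T op e iv} (G: is_group T op e iv) x y z : op x (op y z) = op (op x y) z.
Proof. destruct G as [h _]; apply h. Qed.
Lemma g1l {T op e iv} (G: is_group T op e iv) x : op e x = x.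
Proof. destruct G as [_ [h _]]; apply h. Qed.
Lemma g1r {T op e iv} (G: is_group T op e iv) x : op x e = x.
Proof. destruct G as [_ [_ [h _]]]; apply h. Qed.
Lemma gVl {T op e iv} (G: is_group T op e iv) x : op (iv x) x = e.
Proof. destruct G as [_ [_ [_ [h _]]]]; apply h. Qed.
Lemma gVr {T op e iv} (G: is_group T op e iv) x : op x (iv x) = e.
Proof. destruct G as [_ [_ [_ [_ h]]]]; apply h. Qed.

Lemma gKl {T op e iv} (G: is_group T op e iv) x y : op (iv x) (op x y) = y.
Proof. rewrite (gA G), (gVl G), (g1l G); reflexivity. Qed.
Lemma gKr {T op e iv} (G: is_group T op e iv) x y : op x (op (iv x) y) = y.
Proof. rewrite (gA G), (gVr G), (g1l G); reflexivity. Qed.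
Lemma gKl' {T op e iv} (G: is_group T op e iv) x y : op (op y x) (iv x) = y.
Proof. rewrite <- (gA G), (gVr G), (g1r G); reflexivity. Qed.
Lemma gKr' {T op e iv} (G: is_group T op e iv) x y : op (op y (iv x)) x = y.
Proof. rewrite <- (gA G), (gVl G), (g1r G); reflexivity. Qed.
Lemma gcanl {T op e iv} (G: is_group T op e iv) a x y : op a x = op a y -> x = y.
Proof. intro H. rewrite <- (gKl G a x), H, (gKl G). reflexivity. Qed.
Lemma gcanr {T op e iv} (G: is_group T op e iv) a x y : op x a = op y a -> x = y.
Proof. intro H. rewrite <- (gKl' G a x), H, (gKl' G). reflexivity. Qed.
Lemma ginv_uniq {T op e iv} (G: is_group T op e iv) x y : op x y = e -> y = iv x.
Proof. intro H. apply (gcanl G x). rewrite H, (gVr G). reflexivity. Qed.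
Lemma ginvM {T op e iv} (G: is_group T op e iv) x y : iv (op x y) = op (iv y) (iv x).
Proof. symmetry. apply (ginv_uniq G). rewrite <- (gA G), (gA G y), (gVr G), (g1l G), (gVr G). reflexivity. Qed.
Lemma ginv1 {T op e iv} (G: is_group T op e iv) : iv e = e.
Proof. symmetry. apply (ginv_uniq G). apply (g1l G). Qed.
Lemma ginvK {T op e iv} (G: is_group T op e iv) x : iv (iv x) = x.
Proof. symmetry. apply (ginv_uniq G). apply (gVl G). Qed.

Definition ghom {T} (op : T -> T -> T) (f : T -> T) := forall x y, f (op x y) = op (f x) (f y).
Lemma ghom1 {T op e iv} (G: is_group T op e iv) f : ghom op f -> f e = e.
Proof. intro H. apply (gcanl G (f e)). rewrite <- H, !(g1r G). reflexivity. Qed.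
Lemma ghomV {T op e iv} (G: is_group T op e iv) f : ghom op f -> forall x, f (iv x) = iv (f x).
Proof. intros H x. apply (ginv_uniq G). rewrite <- H, (gVr G). apply (ghom1 G f H). Qed.

Fixpoint pw {T} (op : T -> T -> T) e (x : T) (n : nat) : T :=
  match n with O => e | S k => op (pw op e x k) x end.
Definition zpow {T} (op : T -> T -> T) e iv (x : T) (k : Z) : T :=
  if (0 <=? k)%Z then pw op e x (Z.to_nat k) else iv (pw op e x (Z.to_nat (- k))).

Lemma pw_comm {T op e iv} (G: is_group T op e iv) x n : op x (pw op e x n) = op (pw op e x n) x.
Proof. induction n; simpl. rewrite (g1l G), (g1r G); reflexivity.
  rewrite (gA G), IHn; reflexivity. Qed.

Lemma zpow_succ {T op e iv} (G: is_group T op e iv) x k :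
  zpow op e iv x (Z.succ k) = op (zpow op e iv x k) x.
Proof. unfold zpow. destruct (Z.leb_spec 0 k).
  - rewrite (proj2 (Z.leb_le 0 (Z.succ k))) by lia.
    rewrite Z2Nat.inj_succ by lia. reflexivity.
  - destruct (Z.leb_spec 0 (Z.succ k)).
    + assert (k = -1)%Z by lia. subst. simpl. rewrite (g1l G). symmetry. apply (gVl G).
    + replace (Z.to_nat (- k)) with (S (Z.to_nat (- Z.succ k))) by lia.
      simpl. rewrite <- (pw_comm G), (ginvM G), (gKr' G). reflexivity.
Qed.

Lemma zpow_pred {T op e iv} (G: is_group T op e iv) x k :
  zpow op e iv x (Z.pred k) = op (zpow op e iv x k) (iv x).
Proof. rewrite <- (Z.succ_pred k) at 2. rewrite (zpow_succ G), (gKl' G). reflexivity. Qed.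

Lemma zpow0 {T} op (e:T) iv x : zpow op e iv x 0 = e.
Proof. reflexivity. Qed.

Lemma zpow_add {T op e iv} (G: is_group T op e iv) x a b :
  zpow op e iv x (a + b) = op (zpow op e iv x a) (zpow op e iv x b).
Proof. induction b using Z.peano_ind.
  - rewrite Z.add_0_r, (zpow0 op e iv), (g1r G). reflexivity.
  - rewrite Z.add_succ_r, !(zpow_succ G), IHb, (gA G). reflexivity.
  - rewrite Z.add_pred_r, !(zpow_pred G), IHb, (gA G). reflexivity.
Qed.

Lemma zpow_hom {T op e iv} (G: is_group T op e iv) f (Hf : ghom op f) x k :
  f (zpow op e iv x k) = zpow op e iv (f x) k.
Proof. induction k using Z.peano_ind.
  - apply (ghom1 G f Hf).
  - rewrite !(zpow_succ G), Hf, IHk. reflexivity.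
  - rewrite !(zpow_pred G), Hf, IHk, (ghomV G f Hf). reflexivity.
Qed.

Lemma zpow_neg {T op e iv} (G: is_group T op e iv) x k :
  zpow op e iv x (- k) = iv (zpow op e iv x k).
Proof. apply (ginv_uniq G). rewrite <- (zpow_add G). rewrite Z.add_opp_diag_r. reflexivity. Qed.

Lemma zpow_mul {T op e iv} (G: is_group T op e iv) x a b :
  zpow op e iv (zpow op e iv x a) b = zpow op e iv x (a * b).
Proof. induction b using Z.peano_ind.
  - rewrite Z.mul_0_r. reflexivity.
  - rewrite (zpow_succ G), IHb, Z.mul_succ_r, (zpow_add G). reflexivity.
  - rewrite (zpow_pred G), IHb, Z.mul_pred_r. replace (a * b - a)%Z with (a * b + - a)%Z by lia. rewrite (zpow_add G), (zpow_neg G). reflexivity.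
Qed.

Lemma gen_zpow {T op e iv} (G: is_group T op e iv) g z :
  gen T op e iv (fun y => y = g) z -> exists k, z = zpow op e iv g k.
Proof. induction 1.
  - exists 1%Z. subst. change (g = op e g). rewrite (g1l G). reflexivity.
  - exists 0%Z. reflexivity.
  - destruct IHgen1 as [a ->], IHgen2 as [b ->]. exists (a + b)%Z. rewrite (zpow_add G). reflexivity.
  - destruct IHgen as [a ->]. exists (- a)%Z. rewrite (zpow_neg G). reflexivity.
Qed.

Lemma cyc_comm {T op e iv} (G: is_group T op e iv) (D : T -> Prop)
  (Dcyc : is_cyclic_subgroup T op e iv D) f h
  (Hf : ghom op f) (Hh : ghom op h)
  (fD : forall d, D d -> D (f d)) (hD : forall d, D d -> D (h d)) :
  forall d, D d -> f (h d) = h (f d).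
Proof.
  destruct Dcyc as [g Hg].
  assert (Dg : D g) by (apply Hg; apply gen_in; reflexivity).
  destruct (gen_zpow G g _ (proj1 (Hg _) (fD _ Dg))) as [a Ha].
  destruct (gen_zpow G g _ (proj1 (Hg _) (hD _ Dg))) as [b Hb].
  intros d Dd. destruct (gen_zpow G g _ (proj1 (Hg _) Dd)) as [k ->].
  rewrite (zpow_hom G h Hh), (zpow_hom G f Hf), (zpow_hom G f Hf), (zpow_hom G h Hh).
  rewrite Ha, Hb, (zpow_hom G f Hf), (zpow_hom G h Hh), Ha, Hb, !(zpow_mul G). f_equal. lia.
Qed.

Lemma comm_fix {A} (add : A -> A -> A) zero neg (mul : A -> A -> A) one inv
  (Ga : is_group A add zero neg) (Gm : is_group A mul one inv)
  (D : A -> Prop) (Dcyc : is_cyclic_subgroup A add zero neg D)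
  (Phi : A -> A -> A)
  (Pmul : forall a b y, Phi (mul a b) y = Phi a (Phi b y))
  (Pone : forall y, Phi one y = y)
  (Phom : forall a, ghom add (Phi a))
  (PD : forall a d, D d -> D (Phi a d)) (H : A -> Prop) :
  forall c, commutator_subgroup A mul one inv H c -> forall d, D d -> Phi c d = d.
Proof.
  assert (Pinv : forall x y, Phi (inv x) (Phi x y) = y).
  { intros x y. rewrite <- Pmul, (gVl Gm). apply Pone. }
  induction 1 as [c Hc | | x y _ IHx _ IHy | x _ IHx]; intros d Dd.
  - destruct Hc as [x [y [_ [_ ->]]]]. unfold commg.
    rewrite !Pmul.
    rewrite (cyc_comm Ga D Dcyc (Phi (inv y)) (Phi x) (Phom _) (Phom _) (PD _) (PD _)) by auto.
    rewrite Pinv, Pinv. reflexivity.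
  - apply Pone.
  - rewrite Pmul, IHy, IHx; auto.
  - rewrite <- (IHx d Dd) at 1. apply Pinv.
Qed.


Definition lam {A} (add : A -> A -> A) (neg : A -> A) (mul : A -> A -> A) a y := add (neg a) (mul a y).
Definition psi {A} (add : A -> A -> A) (neg : A -> A) (mul : A -> A -> A) a y :=
  add (add a (lam add neg mul a y)) (neg a).

Lemma lam_hom {A} (add : A -> A -> A) zero neg (mul : A -> A -> A) one inv
  (HA : is_skew_brace A add zero neg mul one inv) a : ghom add (lam add neg mul a).
Proof.
  destruct HA as [Ga [Gm Hb]]. intros x y. unfold lam. rewrite Hb.
  rewrite !(gA Ga). reflexivity.
Qed.

Lemma mul_zero {A} (add : A -> A -> A) zero neg (mul : A -> A -> A) one inv
  (HA : is_skew_brace A add zero neg mul one inv) a : mul a zero = a.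
Proof.
  destruct HA as [Ga [Gm Hb]].
  assert (H := Hb a zero zero). rewrite (g1l Ga) in H.
  rewrite <- (g1l Ga (mul a zero)) in H at 1.
  apply (gcanr Ga) in H.
  rewrite <- (gKr' Ga a (mul a zero)), <- H, (g1l Ga). reflexivity.
Qed.

Lemma one_zero {A} (add : A -> A -> A) zero neg (mul : A -> A -> A) one inv
  (HA : is_skew_brace A add zero neg mul one inv) : one = zero.
Proof.
  rewrite <- (mul_zero add zero neg mul one inv HA one).
  destruct HA as [Ga [Gm Hb]]. apply (g1l Gm).
Qed.

Lemma lam_one {A} (add : A -> A -> A) zero neg (mul : A -> A -> A) one inv
  (HA : is_skew_brace A add zero neg mul one inv) y : lam add neg mul one y = y.
Proof.
  pose proof (one_zero _ _ _ _ _ _ HA) as E.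
  destruct HA as [Ga [Gm Hb]]. unfold lam. rewrite (g1l Gm).
  rewrite E, (ginv1 Ga), (g1l Ga). reflexivity.
Qed.

Lemma lam_mul {A} (add : A -> A -> A) zero neg (mul : A -> A -> A) one inv
  (HA : is_skew_brace A add zero neg mul one inv) a b y :
  lam add neg mul (mul a b) y = lam add neg mul a (lam add neg mul b y).
Proof.
  pose proof (lam_hom _ _ _ _ _ _ HA a) as Hl.
  destruct HA as [Ga [Gm Hb]].
  unfold lam at 3. rewrite Hl, (ghomV Ga _ Hl).
  unfold lam. rewrite (ginvM Ga), (ginvK Ga), <- (gA Ga), (gKr Ga), (gA Gm). reflexivity.
Qed.

Lemma psi_hom {A} (add : A -> A -> A) zero neg (mul : A -> A -> A) one inv
  (HA : is_skew_brace A add zero neg mul one inv) a : ghom add (psi add neg mul a).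
Proof.
  pose proof (lam_hom _ _ _ _ _ _ HA a) as Hl.
  destruct HA as [Ga [Gm Hb]]. intros x y. unfold psi. rewrite Hl.
  rewrite <- !(gA Ga), (gKl Ga). reflexivity.
Qed.

Lemma psi_one {A} (add : A -> A -> A) zero neg (mul : A -> A -> A) one inv
  (HA : is_skew_brace A add zero neg mul one inv) y : psi add neg mul one y = y.
Proof.
  pose proof (lam_one _ _ _ _ _ _ HA y) as E1.
  pose proof (one_zero _ _ _ _ _ _ HA) as E.
  destruct HA as [Ga [Gm Hb]]. unfold psi. rewrite E1, E, (ginv1 Ga), (g1l Ga), (g1r Ga). reflexivity.
Qed.

Lemma psi_mul {A} (add : A -> A -> A) zero neg (mul : A -> A -> A) one inv
  (HA : is_skew_brace A add zero neg mul one inv) a b y :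
  psi add neg mul (mul a b) y = psi add neg mul a (psi add neg mul b y).
Proof.
  pose proof (lam_hom _ _ _ _ _ _ HA a) as Hl.
  pose proof (lam_mul _ _ _ _ _ _ HA a b y) as Hm.
  destruct HA as [Ga [Gm Hb]].
  unfold psi at 2 3. rewrite !Hl, (ghomV Ga _ Hl), <- Hm.
  unfold psi. set (L := lam add neg mul (mul a b) y). set (l := lam add neg mul a b).
  assert (E : add a l = mul a b) by apply (gKr Ga).
  rewrite !(gA Ga), E, <- !(gA Ga). f_equal. f_equal.
  rewrite <- E, (ginvM Ga). reflexivity.
Qed.

Theorem corollary4p5 (A : Type)
  (add : A -> A -> A) (zero : A) (neg : A -> A)
  (mul : A -> A -> A) (one : A) (inv : A -> A)
  (HA : is_skew_brace A add zero neg mul one inv)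
  (D : A -> Prop) (n : nat) (Hn : 0 < n)
  (Dcyc : is_cyclic_subgroup A add zero neg D)
  (Dchar : is_characteristic A add zero neg D)
  (DZ : subset A D (center A add (derived A add zero neg n))) :
  exists m : nat, 0 < m /\
    subset A (derived A mul one inv (m + n)) (centralizer A add D).
Proof.
  pose proof HA as [Ga [Gm Hb]].
  destruct Dchar as [_ Dch].
  assert (lamD : forall a d, D d -> D (lam add neg mul a d)).
  { intros a d Dd. apply Dch; auto. split; [apply (lam_hom _ _ _ _ _ _ HA)|split].
    - intros x y Hxy. rewrite <- (lam_one _ _ _ _ _ _ HA x), <- (lam_one _ _ _ _ _ _ HA y).
      rewrite <- (gVl Gm a), !(lam_mul _ _ _ _ _ _ HA), Hxy. reflexivity.
    - intros y. exists (lam add neg mul (inv a) y).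
      rewrite <- (lam_mul _ _ _ _ _ _ HA), (gVr Gm). apply (lam_one _ _ _ _ _ _ HA). }
  assert (conjD : forall a d, D d -> D (add (add a d) (neg a))).
  { intros a d Dd. apply (Dch (fun z => add (add a z) (neg a))); auto. split; [|split].
    - intros x y. rewrite <- !(gA Ga), (gKl Ga). reflexivity.
    - intros x y Hxy. apply (gcanr Ga) in Hxy. apply (gcanl Ga) in Hxy. exact Hxy.
    - intros y. exists (add (add (neg a) y) a). rewrite <- !(gA Ga), (gVr Ga), (g1r Ga), (gKr Ga).
      reflexivity. }
  exists 1. split; [lia|].
  intros c Hc d Dd. unfold derived in Hc. replace (1 + n - 1) with (S (n - 1)) in Hc by lia.
  simpl in Hc.
  pose proof (comm_fix add zero neg mul one inv Ga Gm D Dcyc (lam add neg mul)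
     (lam_mul _ _ _ _ _ _ HA) (lam_one _ _ _ _ _ _ HA) (lam_hom _ _ _ _ _ _ HA) lamD _ c Hc d Dd) as E1.
  pose proof (comm_fix add zero neg mul one inv Ga Gm D Dcyc (psi add neg mul)
     (psi_mul _ _ _ _ _ _ HA) (psi_one _ _ _ _ _ _ HA) (psi_hom _ _ _ _ _ _ HA)
     (fun a d Dd => conjD a _ (lamD a d Dd)) _ c Hc d Dd) as E2.
  unfold psi in E2. rewrite E1 in E2.
  rewrite <- E2 at 2. rewrite (gKr' Ga). reflexivity.
Qed.
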